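(* Let $w(x,y)=x^{a_1}y^{b_1}\cdots x^{a_k}y^{b_k}\in F_2$ with all integers $a_i\neq0$, $b_i\neq 0$, and put $A=\sum_{i=1}^k a_i$, $B=\sum_{i=1}^k b_i$, $A_i=\sum_{j\le i}a_j$, $B_i=\sum_{j<i}b_j$. If $A\neq 0$ and the word map $w:\mathrm{SL}(2,\mathbb{C})^2\to \mathrm{SL}(2,\mathbb{C})$ is not surjective, then $\sum_{i=1}^k b_i\gamma^{2A_i}=0$ for every root $\gamma$ of $z^A+1=0$. If $B\neq 0$ and the word map $w$ is not surjective, then $\sum_{i=1}^k a_i\delta^{2B_i}=0$ for every root $\delta$ of $z^B+1=0$.
   Context: The word map sends $(X,Y)\in\mathrm{SL}(2,\mathbb{C})^2$ to $X^{a_1}Y^{b_1}\cdots X^{a_k}Y^{b_k}$. *)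

(* Defs.v *)
From HB Require Import structures.
From mathcomp Require Import all_boot all_order all_algebra.
From mathcomp.real_closed Require Import complex.
From mathcomp Require Import Rstruct.
Set Implicit Arguments. Unset Strict Implicit. Unset Printing Implicit Defensive.
Import Order.TTheory GRing.Theory Num.Theory.
Local Open Scope ring_scope.

Notation CC := (Rdefinitions.R[i]).

(* A word w = x^{a_1} y^{b_1} ... x^{a_k} y^{b_k} is encoded by the sequence
   of exponent pairs [:: (a_1,b_1); ...; (a_k,b_k)]. *)
Definition word_map (w : seq (int * int)) (X Y : 'M[CC]_2) : 'M[CC]_2 :=
  \prod_(p <- w) (X ^ p.1 * Y ^ p.2).

Definition SL2 (X : 'M[CC]_2) : Prop := \det X = 1.

Definition word_map_surjective (w : seq (int * int)) : Prop :=
  forall Z : 'M[CC]_2, SL2 Z -> exists X Y, SL2 X /\ SL2 Y /\ word_map w X Y = Z.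

Definition sumA (w : seq (int * int)) : int := \sum_(p <- w) p.1.
Definition sumB (w : seq (int * int)) : int := \sum_(p <- w) p.2.
(* 0-based i:  A_i = sum_{j <= i} a_j ,  B_i = sum_{j < i} b_j *)
Definition partA (w : seq (int * int)) (i : nat) : int := sumA (take i.+1 w).
Definition partB (w : seq (int * int)) (i : nat) : int := sumB (take i w).

(* Main.v *)
Require Import Defs.
From HB Require Import structures.
From mathcomp Require Import all_boot all_order all_algebra.
From mathcomp.real_closed Require Import complex.
From mathcomp Require Import Rstruct.
From mathcomp Require Import ring.
Import Order.TTheory GRing.Theory Num.Theory.
Local Open Scope ring_scope.

Definition mx2 (a b c d : CC) : 'M[CC]_2 :=
  \matrix_(i < 2, j < 2) if i == 0 then (if j == 0 then a else b)
                         else (if j == 0 then c else d).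

Lemma mx2E (M : 'M[CC]_2) : M = mx2 (M 0 0) (M 0 1) (M 1 0) (M 1 1).
Proof.
apply/matrixP => i j; rewrite !mxE.
by case: i => [[|[|//]] Hi]; case: j => [[|[|//]] Hj] /=;
  congr (M _ _); apply/val_inj.
Qed.

Lemma mx2_mul a b c d a' b' c' d' :
  mx2 a b c d * mx2 a' b' c' d' =
  mx2 (a*a'+b*c') (a*b'+b*d') (c*a'+d*c') (c*b'+d*d').
Proof.
apply/matrixP => i j; rewrite !mxE !big_ord_recl big_ord0 !mxE /=.
by case: i => [[|[|//]] Hi]; case: j => [[|[|//]] Hj]; rewrite /= addr0.
Qed.

Lemma mx2_det a b c d : \det (mx2 a b c d) = a * d - b * c.
Proof.
rewrite (expand_det_row _ ord0) !big_ord_recl big_ord0 /cofactor !det_mx11 !mxE /=.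
by rewrite /= expr0 expr1 addr0 !mul1r mulN1r mulrN.
Qed.

Lemma mx2_1 : (1 : 'M[CC]_2) = mx2 1 0 0 1.
Proof.
apply/matrixP => i j; rewrite !mxE.
by case: i => [[|[|//]] Hi]; case: j => [[|[|//]] Hj].
Qed.

Lemma mx2_inj a b c d a' b' c' d' : a = a' -> b = b' -> c = c' -> d = d' ->
  mx2 a b c d = mx2 a' b' c' d'.
Proof. by move=> -> -> -> ->. Qed.

Definition U (d e : CC) := mx2 d e 0 d^-1.

Lemma U_mul d e d' e' : U d e * U d' e' = U (d * d') (d * e' + e * d'^-1).
Proof. rewrite /U mx2_mul; apply: mx2_inj; rewrite ?invfM; ring. Qed.

Lemma U10 : U 1 0 = 1.
Proof. by rewrite mx2_1 /U invr1. Qed.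

Lemma U_det d e : d != 0 -> \det (U d e) = 1.
Proof. by move=> d0; rewrite mx2_det mulr0 subr0 mulfV. Qed.

Lemma U_unit d e : d != 0 -> U d e \is a GRing.unit.
Proof. by move=> d0; rewrite -[_ \is a _]/(_ \in unitmx) unitmxE U_det ?unitr1. Qed.

Lemma U_inv d e : d != 0 -> (U d e)^-1 = U d^-1 (-e).
Proof.
move=> d0.
have H : U d e * U d^-1 (-e) = 1.
  rewrite U_mul invrK mulfV // -U10; congr U; rewrite mulrN mulrC addNr //.
by rewrite -[LHS]mulr1 -H mulKr // U_unit.
Qed.

Lemma Ud0X d (z : int) : d != 0 -> (U d 0) ^ z = U (d ^ z) 0.
Proof.
move=> d0; have P n : U d 0 ^+ n = U (d ^+ n) 0.
  elim: n => [|n IH]; first by rewrite !expr0 U10.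
  by rewrite !exprS IH U_mul !mul0r mulr0 addr0.
case: z => n; rewrite /exprz ?P //.
rewrite U_inv ?oppr0 //; exact: expf_neq0.
Qed.

Lemma U1X e (z : int) : (U 1 e) ^ z = U 1 (e * z%:~R).
Proof.
have P n : U 1 e ^+ n = U 1 (e * n%:R).
  elim: n => [|n IH]; first by rewrite !expr0 mulr0 U10.
  rewrite !exprS IH U_mul mul1r invr1 mulr1 -natr1; congr U; ring.
case: z => n; rewrite /exprz ?P //.
rewrite U_inv ?oner_neq0 // invr1 NegzE mulrN. done.
Qed.

Lemma sumA_cons p w : sumA (p :: w) = p.1 + sumA w.
Proof. by rewrite /sumA big_cons. Qed.
Lemma sumB_cons p w : sumB (p :: w) = p.2 + sumB w.
Proof. by rewrite /sumB big_cons. Qed.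
Lemma partA0 p w : partA (p :: w) 0 = p.1.
Proof. by rewrite /partA /= take0 sumA_cons /sumA big_nil addr0. Qed.
Lemma partAS p w i : partA (p :: w) i.+1 = p.1 + partA w i.
Proof. by rewrite /partA /= sumA_cons. Qed.
Lemma partB0 p w : partB (p :: w) 0 = 0.
Proof. by rewrite /partB /= /sumB big_nil. Qed.
Lemma partBS p w i : partB (p :: w) i.+1 = p.2 + partB w i.
Proof. by rewrite /partB /= sumB_cons. Qed.

Definition S1 (l : CC) w :=
  \sum_(i < size w) ((nth (0, 0) w i).2)%:~R * l ^ (2 * partA w i).
Definition S2 (l : CC) w :=
  \sum_(i < size w) ((nth (0, 0) w i).1)%:~R * l ^ (2 * partB w i).

Lemma exp2z (l : CC) (z : int) : l != 0 -> l ^ (2 * z) = l ^ z * l ^ z.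
Proof.
move=> l0; rewrite -exprzDr ?unitfE //; congr (_ ^ _); ring.
Qed.

Lemma S1_cons l p w : l != 0 ->
  S1 l (p :: w) = (p.2)%:~R * (l ^ p.1 * l ^ p.1) + (l ^ p.1 * l ^ p.1) * S1 l w.
Proof.
move=> l0; rewrite /S1 /= big_ord_recl /= partA0 exp2z //; congr (_ + _).
rewrite mulr_sumr; apply: eq_bigr => i _.
rewrite partAS mulrDr exprzDr ?unitfE // !exp2z //; ring.
Qed.

Lemma S2_cons l p w : l != 0 ->
  S2 l (p :: w) = (p.1)%:~R + (l ^ p.2 * l ^ p.2) * S2 l w.
Proof.
move=> l0; rewrite /S2 /= big_ord_recl /= partB0 mulr0 expr0z mulr1; congr (_ + _).
rewrite mulr_sumr; apply: eq_bigr => i _.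
rewrite partBS mulrDr exprzDr ?unitfE // !exp2z //; ring.
Qed.

Lemma F1 w l y : l != 0 ->
  word_map w (U l 0) (U 1 y) = U (l ^ sumA w) (y * (l ^ sumA w)^-1 * S1 l w).
Proof.
move=> l0; elim: w => [|p w IH].
  by rewrite /word_map big_nil /S1 big_ord0 /sumA big_nil expr0z mulr0 U10.
rewrite /word_map big_cons -/(word_map w _ _) IH Ud0X // U1X !U_mul.
rewrite S1_cons // sumA_cons exprzDr ?unitfE //.
have u0 : l ^ p.1 != 0 by rewrite expfz_neq0.
have v0 : l ^ sumA w != 0 by rewrite expfz_neq0.
congr U; first by rewrite mulr1.
rewrite invr1 !mulr1 invfM addr0; field; by apply/andP.
Qed.

Lemma F2 w l x : l != 0 ->
  word_map w (U 1 x) (U l 0) = U (l ^ sumB w) (x * (l ^ sumB w)^-1 * S2 l w).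
Proof.
move=> l0; elim: w => [|p w IH].
  by rewrite /word_map big_nil /S2 big_ord0 /sumB big_nil expr0z mulr0 U10.
rewrite /word_map big_cons -/(word_map w _ _) IH Ud0X // U1X !U_mul.
rewrite S2_cons // sumB_cons exprzDr ?unitfE //.
have u0 : l ^ p.2 != 0 by rewrite expfz_neq0.
have v0 : l ^ sumB w != 0 by rewrite expfz_neq0.
congr U; first by rewrite mul1r.
rewrite !mul1r invfM; field; by apply/andP.
Qed.

Lemma conjX (P X : 'M[CC]_2) (z : int) : P \is a GRing.unit -> X \is a GRing.unit ->
  (P * X * P^-1) ^ z = P * X ^ z * P^-1.
Proof.
move=> uP uX; have H n : (P * X * P^-1) ^+ n = P * X ^+ n * P^-1.
  elim: n => [|n IH]; first by rewrite !expr0 mulr1 mulrV.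
  
  by rewrite exprS IH exprS !mulrA mulrVK.
case: z => n; rewrite /exprz H //.
have uXn : X ^+ n.+1 \is a GRing.unit by rewrite unitrX.
have uPX : P * X ^+ n.+1 \is a GRing.unit by rewrite unitrMr.
rewrite (@invrM _ (P * X ^+ n.+1) P^-1 uPX) ?unitrV // invrK (@invrM _ P (X ^+ n.+1)) // mulrA.
done.
Qed.


Lemma wm_nil X Y : word_map [::] X Y = 1.
Proof. exact: big_nil. Qed.
Lemma wm_cons p w X Y : word_map (p :: w) X Y = (X ^ p.1 * Y ^ p.2) * word_map w X Y.
Proof. exact: big_cons. Qed.

Lemma conjM (R : unitRingType) (P a b : R) : P \is a GRing.unit ->
  P * a / P * (P * b / P) = P * (a * b) / P.
Proof. by move=> uP; rewrite !mulrA mulrVK. Qed.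

Lemma conj_word w (P X Y : 'M[CC]_2) : P \is a GRing.unit -> X \is a GRing.unit ->
  Y \is a GRing.unit ->
  word_map w (P * X * P^-1) (P * Y * P^-1) = P * word_map w X Y * P^-1.
Proof.
move=> uP uX uY; elim: w => [|p w IH].
  by rewrite !wm_nil mulr1 mulrV.
rewrite !wm_cons IH (conjX _ _ p.1 uP uX) (conjX _ _ p.2 uP uY).
by rewrite !conjM.
Qed.

Lemma SL2_unit X : SL2 X -> X \is a GRing.unit.
Proof. by move=> h; rewrite -[_ \is a _]/(_ \in unitmx) unitmxE h unitr1. Qed.

Lemma SL2_conj (P X : 'M[CC]_2) : P \is a GRing.unit -> SL2 X -> SL2 (P * X * P^-1).
Proof.
move=> uP; rewrite /SL2 => h.
have -> : P * X / P = P *m X *m P^-1 by [].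
rewrite !det_mulmx detV h mulr1 mulfV //.

Qed.

Lemma hit_conj w (P T : 'M[CC]_2) : P \is a GRing.unit ->
  (exists X Y, SL2 X /\ SL2 Y /\ word_map w X Y = T) ->
  exists X Y, SL2 X /\ SL2 Y /\ word_map w X Y = P * T * P^-1.
Proof.
move=> uP [X [Y [sX [sY e]]]]; exists (P * X * P^-1), (P * Y * P^-1).
split; first exact: SL2_conj.
split; first exact: SL2_conj.
rewrite conj_word //; [by rewrite e | exact: SL2_unit | exact: SL2_unit].
Qed.




Lemma exp1z (z : int) : (1 : CC) ^ z = 1.
Proof. by case: z => n; rewrite /exprz expr1n ?invr1. Qed.

Lemma S1_1 w : S1 1 w = (sumB w)%:~R.
Proof.
elim: w => [|p w IH]; first by rewrite /S1 big_ord0 /sumB big_nil.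
by rewrite S1_cons ?oner_neq0 // IH sumB_cons exp1z !mulr1 mul1r intrD.
Qed.

Lemma S2_1 w : S2 1 w = (sumA w)%:~R.
Proof.
elim: w => [|p w IH]; first by rewrite /S2 big_ord0 /sumA big_nil.
by rewrite S2_cons ?oner_neq0 // IH sumA_cons exp1z !mulr1 mul1r intrD.
Qed.

Lemma rootz (A : int) (a : CC) : A != 0 -> a != 0 -> exists l : CC, l ^ A = a.
Proof.
move=> A0 a0.
have H n (b : CC) : (0 < n)%N -> exists l : CC, l ^+ n = b.
  move=> n0; have [l hl] := @solve_monicpoly CC n (fun i => if i == 0%N then b else 0) n0.
  exists l; rewrite hl; case: n n0 {hl} => // n _.
  rewrite big_ord_recl /= expr0 mulr1 big1 ?addr0 // => i _; by rewrite mul0r.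
case: A A0 => n A0.
  have n0 : (0 < n)%N by rewrite lt0n; apply: contraNneq A0 => ->.
  have [l hl] := H n a n0; exists l; by rewrite /exprz.
have [l hl] := H n.+1 a^-1 (ltn0Sn n); exists l; by rewrite /exprz hl invrK.
Qed.


Lemma triang (Z : 'M[CC]_2) : SL2 Z ->
  exists P a b, P \is a GRing.unit /\ a != 0 /\ Z = P * U a b * P^-1.
Proof.
rewrite /SL2 (mx2E Z) mx2_det.
move: (Z 0 0) (Z 0 1) (Z 1 0) (Z 1 1) => a b c d hdet.
have [c0|c0] := eqVneq c 0.
  have a0 : a != 0.
    apply/eqP => a0; move: hdet; rewrite a0 c0 !mulr0 mul0r subr0 => /eqP.
    by rewrite eq_sym oner_eq0.
  exists 1, a, b; split; first exact: unitr1.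
  split => //; rewrite mul1r invr1 mulr1 /U c0; congr mx2.
  apply: (mulfI a0); rewrite mulfV //; move: hdet; rewrite c0 mulr0 subr0 //.
have [l hl] := @solve_monicpoly CC 2 (fun i => if i == 0%N then -1 else a + d) isT.
rewrite !big_ord_recl big_ord0 /= expr0 expr1 mulr1 addr0 in hl.
have l0 : l != 0.
  apply/eqP => l0; move: hl; rewrite l0 expr0n /= mulr0 addr0 => /eqP.
  by rewrite eq_sym oppr_eq0 oner_eq0.
set P := mx2 (l - d) 1 c 0.
have uP : P \is a GRing.unit.
  rewrite -[_ \is a _]/(_ \in unitmx) unitmxE mx2_det unitfE mulr0 sub0r mul1r oppr_eq0 //.
exists P, l, 1; split => //; split => //.
have e : l * (a + d - l) = 1.
  have : l ^+ 2 = - 1 + (a + d) * l by [].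
  rewrite expr2 => h; rewrite mulrBr mulrC h; ring.
have li : l^-1 = a + d - l by rewrite -[l^-1]mulr1 -e mulKf.
rewrite -[LHS](mulrK uP); congr (_ * _).
rewrite /P /U mx2_mul mx2_mul li; apply: mx2_inj.
- have : l ^+ 2 = - 1 + (a + d) * l by [].
  rewrite expr2 => h.
  rewrite mulrBl h mulr0 addr0.
  have -> : 1 = a * d - b * c by [].
  ring.
- ring.
- ring.
- ring.
Qed.


Lemma SL2U d e : d != 0 -> SL2 (U d e).
Proof. exact: U_det. Qed.

Lemma conj_diag (a b : CC) : a != 0 -> a != 1 -> a != -1 ->
  exists Q, Q \is a GRing.unit /\ U a b = Q * U a 0 * Q^-1.
Proof.
move=> a0 a1 aN1.
have k0 : a^-1 - a != 0.
  apply/eqP => h; have : a * (a^-1 - a) = 0 by rewrite h mulr0.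
  move/eqP; rewrite mulrBr mulfV // -expr2 subr_eq0 eq_sym sqrf_eq1 => /orP[]; by apply/negP.
exists (U 1 (b / (a^-1 - a))); split; first exact: U_unit (oner_neq0 _).
rewrite U_inv ?oner_neq0 // !U_mul invr1; congr U; first by rewrite mul1r mulr1.
rewrite mul1r mulr0 add0r divr1.
have -> : forall x : CC, a * - x + x / a = x * (a^-1 - a) by move=> x; ring.
by rewrite divfK.
Qed.

Lemma neq01 (a : CC) : [|| a == 1, a == -1 | (a != 1) && (a != -1)].
Proof. by case: (a == 1); case: (a == -1). Qed.

Lemma hit1 w g a b : sumA w != 0 -> g ^ sumA w = -1 -> S1 g w != 0 -> a != 0 ->
  exists X Y, SL2 X /\ SL2 Y /\ word_map w X Y = U a b.
Proof.
move=> A0 hg S0 a0.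
have g0 : g != 0.
  apply/eqP => g0; move: hg; rewrite g0 exp0rz (negbTE A0) => /eqP.
  by rewrite eq_sym oppr_eq0 oner_eq0.
have A0' : (sumA w)%:~R != 0 :> CC by rewrite intr_eq0.
case/or3P: (neq01 a) => [/eqP -> | /eqP -> | /andP[a1 aN1]].
- exists (U 1 (b / (sumA w)%:~R)), (U 1 0); split; first exact: SL2U (oner_neq0 _).
  split; first exact: SL2U (oner_neq0 _).
  rewrite F2 ?oner_neq0 // S2_1 exp1z invr1 mulr1 divfK //.
- exists (U g 0), (U 1 (- b / S1 g w)); split; first exact: SL2U.
  split; first exact: SL2U (oner_neq0 _).
  rewrite F1 // hg invrN1; congr U; by field.
- have [Q [uQ ->]] := @conj_diag a b a0 a1 aN1.
  apply: hit_conj => //.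
  have [l hl] := @rootz _ _ A0 a0.
  have l0 : l != 0 by apply: contraNneq a0 => l0; rewrite -hl l0 exp0rz (negbTE A0).
  exists (U l 0), (U 1 0); split; first exact: SL2U.
  split; first exact: SL2U (oner_neq0 _).
  by rewrite F1 // hl !mul0r.
Qed.

Lemma hit2 w g a b : sumB w != 0 -> g ^ sumB w = -1 -> S2 g w != 0 -> a != 0 ->
  exists X Y, SL2 X /\ SL2 Y /\ word_map w X Y = U a b.
Proof.
move=> A0 hg S0 a0.
have g0 : g != 0.
  apply/eqP => g0; move: hg; rewrite g0 exp0rz (negbTE A0) => /eqP.
  by rewrite eq_sym oppr_eq0 oner_eq0.
have A0' : (sumB w)%:~R != 0 :> CC by rewrite intr_eq0.
case/or3P: (neq01 a) => [/eqP -> | /eqP -> | /andP[a1 aN1]].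
- exists (U 1 0), (U 1 (b / (sumB w)%:~R)); split; first exact: SL2U (oner_neq0 _).
  split; first exact: SL2U (oner_neq0 _).
  rewrite F1 ?oner_neq0 // S1_1 exp1z invr1 mulr1 divfK //.
- exists (U 1 (- b / S2 g w)), (U g 0); split; first exact: SL2U (oner_neq0 _).
  split; first exact: SL2U.
  rewrite F2 // hg invrN1; congr U; by field.
- have [Q [uQ ->]] := @conj_diag a b a0 a1 aN1.
  apply: hit_conj => //.
  have [l hl] := @rootz _ _ A0 a0.
  have l0 : l != 0 by apply: contraNneq a0 => l0; rewrite -hl l0 exp0rz (negbTE A0).
  exists (U 1 0), (U l 0); split; first exact: SL2U (oner_neq0 _).
  split; first exact: SL2U.
  by rewrite F2 // hl !mul0r.
Qed.

Theorem lemma7p2 (w : seq (int * int)) :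
  (forall p, p \in w -> p.1 != 0 /\ p.2 != 0) ->
  (sumA w != 0 -> ~ word_map_surjective w ->
     forall g : CC, g ^ (sumA w) + 1 = 0 ->
       \sum_(i < size w) ((nth (0, 0) w i).2)%:~R * g ^ (2 * partA w i) = 0) /\
  (sumB w != 0 -> ~ word_map_surjective w ->
     forall d : CC, d ^ (sumB w) + 1 = 0 ->
       \sum_(i < size w) ((nth (0, 0) w i).1)%:~R * d ^ (2 * partB w i) = 0).
Proof.
move=> _; split.
- move=> A0 ns g hg; apply/eqP; apply: contraT => hS; exfalso; apply: ns.
  move=> Z sZ; have [P [a [b [uP [a0 ->]]]]] := @triang Z sZ.
  apply: hit_conj => //; apply: (@hit1 w g) => //.
  by apply/eqP; rewrite -addr_eq0 hg.
- move=> A0 ns g hg; apply/eqP; apply: contraT => hS; exfalso; apply: ns.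
  move=> Z sZ; have [P [a [b [uP [a0 ->]]]]] := @triang Z sZ.
  apply: hit_conj => //; apply: (@hit2 w g) => //.
  by apply/eqP; rewrite -addr_eq0 hg.
Qed.
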